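(* Let $\Omega\subset\mathbb{R}^2$ be a convex polygon with $m$ sides, let $p\in\operatorname{int}\Omega$ and $r>0$. Then the Thompson ball $B_T(p,r)$ equals $B_F(p,r)\cap B_{rF}(p,r)$, and it is a convex polygon with at most $2m$ sides.
   Context: For distinct $p,q\in\operatorname{int}\Omega$, let $q'$ be the point where the ray from $p$ through $q$ meets $\partial\Omega$. The Funk weak metric is $F_\Omega(p,q)=\ln\frac{\|p-q'\|}{\|q-q'\|}$, with $F_\Omega(p,p)=0$. The reverse Funk metric is $rF_\Omega(p,q)=F_\Omega(q,p)$. The Thompson metric is $T_\Omega(p,q)=\max(F_\Omega(p,q),rF_\Omega(p,q))$. For a function $D\in\{F_\Omega,rF_\Omega,T_\Omega\}$, the ball of radius $r$ about $p$ is $B_D(p,r)=\{q\in\operatorname{int}\Omega: D(p,q)\le r\}$; these are written $B_F$, $B_{rF}$, $B_T$ respectively. *)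

(* Defs.v *)
From HB Require Import structures.
From mathcomp Require Import all_boot all_order all_algebra.
From mathcomp Require Import all_classical all_reals all_analysis.
Set Implicit Arguments. Unset Strict Implicit. Unset Printing Implicit Defensive.
Import Order.TTheory GRing.Theory Num.Theory.
Import numFieldNormedType.Exports.
Local Open Scope classical_set_scope.
Local Open Scope ring_scope.

Section Defs.
Variable R : realType.
Notation P := (R * R)%type.

Definition edist (x y : P) : R :=
  Num.sqrt ((x.1 - y.1) ^+ 2 + (x.2 - y.2) ^+ 2).

Definition bdry (S : set P) : set P := closure S `\` interior S.

Definition ray (p q : P) : set P :=
  [set x | exists t : R, 0 <= t /\ x = (p.1 + t * (q.1 - p.1), p.2 + t * (q.2 - p.2))].

Definition exit_point (Om : set P) (p q : P) : P :=
  xget p (ray p q `&` bdry Om).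

Definition Funk (Om : set P) (p q : P) : R :=
  if p == q then 0
  else ln (edist p (exit_point Om p q) / edist q (exit_point Om p q)).

Definition rFunk (Om : set P) (p q : P) : R := Funk Om q p.

Definition Thompson (Om : set P) (p q : P) : R :=
  Num.max (Funk Om p q) (rFunk Om p q).

Definition ball_D (Om : set P) (D : P -> P -> R) (p : P) (r : R) : set P :=
  [set q | interior Om q /\ D p q <= r].

Definition halfplane (a : P) (b : R) : set P :=
  [set x | a.1 * x.1 + a.2 * x.2 <= b].

Definition polygon_hrep (n : nat) (S : set P) : Prop :=
  (exists M : R, forall x, S x -> `|x.1| <= M /\ `|x.2| <= M) /\
  interior S !=set0 /\
  exists (a : 'I_n -> P) (b : 'I_n -> R),
    (forall i, a i != 0) /\ S = [set x | forall i, halfplane (a i) (b i) x].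

(* S is a convex polygon with exactly m sides: the number of sides of a
   convex polygon is the minimal number of half-planes cutting it out *)
Definition convex_polygon_sides (S : set P) (m : nat) : Prop :=
  polygon_hrep m S /\ forall k, (k < m)%N -> ~ polygon_hrep k S.

End Defs.

(* Main.v *)
Require Import Defs.
From HB Require Import structures.
From mathcomp Require Import all_boot all_order all_algebra.
From mathcomp Require Import all_classical all_reals all_analysis.
From mathcomp Require Import ring lra.
Import Order.TTheory GRing.Theory Num.Theory.
Import numFieldNormedType.Exports.
Local Open Scope classical_set_scope.
Local Open Scope ring_scope.
Set Implicit Arguments. Unset Strict Implicit.

Lemma lin_bound (R : realType) (a1 u e : R) : `|u| < e ->
  a1 * u <= `|a1| * e /\ - (a1 * u) <= `|a1| * e.
Proof.
move=> h; split.
  apply: (le_trans (ler_norm _)); rewrite normrM ler_wpM2l //; exact: ltW.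
apply: (le_trans (ler_norm _)); rewrite normrN normrM ler_wpM2l //; exact: ltW.
Qed.

Lemma open_half (R : realType) (a x : R * R) (b : R) :
  a.1 * x.1 + a.2 * x.2 < b -> nbhs x [set y : R * R | a.1 * y.1 + a.2 * y.2 < b].
Proof.
move=> h; apply/nbhs_ballP.
have hc : 0 < `|a.1| + `|a.2| + 1 by rewrite ltr_pwDr // addr_ge0.
set e := ((b - (a.1 * x.1 + a.2 * x.2)) / (`|a.1| + `|a.2| + 1)).
have he : 0 < e by rewrite /e divr_gt0 // subr_gt0.
have hce : (`|a.1| + `|a.2| + 1) * e = b - (a.1 * x.1 + a.2 * x.2).
  by rewrite /e mulrC -mulrA mulVf ?mulr1 // gt_eqF.
exists e => // y [/= h1 h2].
move: h1 h2; rewrite /ball /= => h1 h2.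
have [_ k1] := lin_bound a.1 h1.
have [_ k2] := lin_bound a.2 h2.
have n1 := normr_ge0 a.1.
have n2 := normr_ge0 a.2.
nra.
Qed.

Definition hset (R : realType) n (a : 'I_n -> R * R) (b : 'I_n -> R) : set (R * R) :=
  [set x | forall i, halfplane (a i) (b i) x].

Lemma strict_int (R : realType) n (a : 'I_n -> R * R) b x :
  (forall i, (a i).1 * x.1 + (a i).2 * x.2 < b i) -> interior (hset a b) x.
Proof.
move=> h; rewrite /interior /=.
have : \forall y \near x, forall i, (a i).1 * y.1 + (a i).2 * y.2 < b i.
  exact: (@filter_forall _ _ _ (nbhs x) _ (fun i => open_half (h i))).
apply: filterS => y hy i; rewrite /halfplane /=; exact: ltW.
Qed.

Lemma nz_sq (R : realType) (a : R * R) : a != 0 -> 0 < a.1 ^+ 2 + a.2 ^+ 2.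
Proof.
case: a => a1 a2 /= ha.
have [h1|h1] := eqVneq a1 0; have [h2|h2] := eqVneq a2 0.
- move: ha; rewrite h1 h2 => /eqP hne; exfalso; exact: hne.
- by rewrite h1 expr0n /= add0r exprn_even_gt0.
- by rewrite h2 expr0n /= addr0 exprn_even_gt0.
- by rewrite ltr_pwDl ?sqr_ge0 // exprn_even_gt0.
Qed.

Lemma int_strict (R : realType) n (a : 'I_n -> R * R) b x :
  (forall i, a i != 0) -> interior (hset a b) x ->
  forall i, (a i).1 * x.1 + (a i).2 * x.2 < b i.
Proof.
move=> ha hx i.
have hS := interior_subset hx i; rewrite /halfplane /= in hS.
rewrite lt_neqAle hS andbT; apply/negP => /eqP heq.
move/nbhs_ballP: hx => [e he hb].
set c := `|(a i).1| + `|(a i).2| + 1.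
have hc : 0 < c by rewrite ltr_pwDr // addr_ge0.
set t := e / c.
have ht : 0 < t by rewrite divr_gt0.
have htc : t * c = e by rewrite /t -mulrA mulVf ?mulr1 // gt_eqF.
rewrite /c in htc.
have hy := hb (x.1 + t * (a i).1, x.2 + t * (a i).2).
have hin : ball x e (x.1 + t * (a i).1, x.2 + t * (a i).2).
  split; rewrite /ball /= opprD addrA subrr sub0r normrN normrM gtr0_norm //.
    have n2 := normr_ge0 (a i).2. nra.
  have n1 := normr_ge0 (a i).1. nra.
have := hy hin i; rewrite /halfplane /=.
have hsq := nz_sq (ha i).
move=> hle. nra.
Qed.

Lemma closure_sub (R : realType) n (a : 'I_n -> R * R) b x :
  closure (hset a b) x -> hset a b x.
Proof.
move=> hx i; rewrite /halfplane /=; rewrite leNgt; apply/negP => hlt.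
have hn : nbhs x [set y : R * R | (- (a i)).1 * y.1 + (- (a i)).2 * y.2 < - b i].
  apply: open_half => /=; lra.
have [y [hy1 hy2]] := hx _ hn.
have := hy1 i; rewrite /halfplane /=; move: hy2 => /=; lra.
Qed.

Lemma bdry_hset (R : realType) n (a : 'I_n -> R * R) b z :
  (forall i, a i != 0) ->
  bdry (hset a b) z <-> hset a b z /\ exists j, (a j).1 * z.1 + (a j).2 * z.2 = b j.
Proof.
move=> ha; split.
  case=> hc hni; have hz := closure_sub hc; split => //.
  apply: contrapT => hne; apply: hni; apply: strict_int => i.
  have := hz i; rewrite /halfplane /= le_eqVlt => /orP[/eqP he|//].
  by exfalso; apply: hne; exists i.
case=> hz [j hj]; split; first exact: subset_closure.
move=> hi; have := int_strict ha hi j; rewrite hj; by rewrite ltxx.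
Qed.

Lemma pos_dir (R : realType) n (a : 'I_n -> R * R) b x d (M : R) :
  (forall z, hset a b z -> `|z.1| <= M /\ `|z.2| <= M) ->
  (forall i, (a i).1 * x.1 + (a i).2 * x.2 < b i) -> d != 0 ->
  exists j, 0 < (a j).1 * d.1 + (a j).2 * d.2.
Proof.
move=> hM hx hd; apply: contrapT => hne.
have hall : forall i, (a i).1 * d.1 + (a i).2 * d.2 <= 0.
  move=> i; rewrite leNgt; apply/negP => hi; apply: hne; by exists i.
have hin : forall t, 0 <= t -> hset a b (x.1 + t * d.1, x.2 + t * d.2).
  move=> t ht i; rewrite /halfplane /=.
  have := hall i; have := hx i => h1 h2; nra.
have hD := nz_sq hd.
have hs : 0 < `|d.1| + `|d.2|.
  case: (eqVneq d.1 0) => h1.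
    rewrite h1 normr0 add0r normr_gt0; apply/eqP => h2.
    by move: hD; rewrite h1 h2 expr0n /= addr0 ltxx.
  have := normr_ge0 d.2; have : 0 < `|d.1| by rewrite normr_gt0.
  move=> ? ?; lra.
set t := (2 * M + `|x.1| + `|x.2| + 1) / (`|d.1| + `|d.2|).
have hM0 : 0 <= M by have [h _] := hM x (fun i => ltW (hx i)); exact: le_trans h.
have ht : 0 <= t.
  rewrite /t divr_ge0 // ?ltW //.
  have := normr_ge0 x.1; have := normr_ge0 x.2; move=> ? ?; lra.
have htd : t * (`|d.1| + `|d.2|) = 2 * M + `|x.1| + `|x.2| + 1.
  by rewrite /t -mulrA mulVf ?mulr1 // gt_eqF.
have [h1 h2] := hM _ (hin t ht); move: h1 h2 => /= h1 h2.
have e1 : `|t * d.1| <= `|x.1 + t * d.1| + `|x.1|.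
  by have := ler_normD (x.1 + t * d.1) (- x.1); rewrite normrN addrAC subrr add0r.
have e2 : `|t * d.2| <= `|x.2 + t * d.2| + `|x.2|.
  by have := ler_normD (x.2 + t * d.2) (- x.2); rewrite normrN addrAC subrr add0r.
rewrite (normrM t) (ger0_norm ht) in e1.
rewrite (normrM t) (ger0_norm ht) in e2.
nra.
Qed.

Lemma exit_char (R : realType) n (a : 'I_n -> R * R) b x y (M : R) :
  (forall z, hset a b z -> `|z.1| <= M /\ `|z.2| <= M) ->
  (forall i, a i != 0) ->
  (forall i, (a i).1 * x.1 + (a i).2 * x.2 < b i) -> y != x ->
  exists t, 0 <= t /\
    exit_point (hset a b) x y = (x.1 + t * (y.1 - x.1), x.2 + t * (y.2 - x.2)) /\
    hset a b (x.1 + t * (y.1 - x.1), x.2 + t * (y.2 - x.2)) /\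
    exists j, (a j).1 * (x.1 + t * (y.1 - x.1)) + (a j).2 * (x.2 + t * (y.2 - x.2)) = b j.
Proof.
move=> hM ha hx hyx.
have hd : (y.1 - x.1, y.2 - x.2) != 0 :> R * R.
  apply/eqP => h; have h1 := congr1 fst h; have h2 := congr1 snd h.
  move: h1 h2 => /= /eqP h1 /eqP h2; move: h1 h2; rewrite !subr_eq0 => /eqP h1 /eqP h2.
  move/eqP: hyx; apply; case: x y {hx h} h1 h2 => x1 x2 [y1 y2] /= -> ->; by [].
have [j0 hj0] := pos_dir hM hx hd; move: hj0 => /= hj0.
pose u i := (a i).1 * (y.1 - x.1) + (a i).2 * (y.2 - x.2).
pose s i := b i - ((a i).1 * x.1 + (a i).2 * x.2).
have hs : forall i, 0 < s i by move=> i; rewrite /s subr_gt0.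
have hex : exists z, (ray x y `&` bdry (hset a b)) z.
  case: (@arg_minP _ R _ j0 (fun i => 0 < u i) (fun i => s i / u i) hj0) => j hj hmin.
  set T := s j / u j.
  have hT : 0 < T by rewrite /T divr_gt0 // hs.
  have hTj : T * u j = s j by rewrite /T divfK // gt_eqF.
  exists (x.1 + T * (y.1 - x.1), x.2 + T * (y.2 - x.2)); split.
    by exists T; split => //; exact: ltW.
  apply/bdry_hset => //; split; last first.
    exists j => /=; move: hTj; rewrite /u /s => ?; lra.
  move=> i; rewrite /halfplane /=.
  have hsi := hs i.
  case: (ltP 0 (u i)) => hui.
    have := hmin i hui; rewrite /= -/T ler_pdivlMr // => hle.
    move: hle hsi; rewrite /u /s => ? ?; nra.
  move: hui hsi; rewrite /u /s => ? ?; nra.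
have [hr hb] := xgetPex x hex.
rewrite /exit_point.
move: hr => [t [ht he]].
have [hz [j hj]] := (@bdry_hset R n a b _ ha).1 hb.
rewrite he /= in hz hj.
exists t; split => //; split => //; split => //; exists j; exact: hj.
Qed.

Lemma diff_nz (R : realType) (x y : R * R) : y != x ->
  0 < (y.1 - x.1) ^+ 2 + (y.2 - x.2) ^+ 2.
Proof.
move=> hyx.
have hd : (y.1 - x.1, y.2 - x.2) != 0 :> R * R.
  apply/eqP => h; have h1 := congr1 fst h; have h2 := congr1 snd h.
  move: h1 h2 => /= /eqP h1 /eqP h2; move: h1 h2; rewrite !subr_eq0 => /eqP h1 /eqP h2.
  move/eqP: hyx; apply; case: x y {h} h1 h2 => x1 x2 [y1 y2] /= -> ->; by [].
exact: (nz_sq hd).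
Qed.

Lemma funk_le (R : realType) n (a : 'I_n -> R * R) b x y (M r : R) :
  (forall z, hset a b z -> `|z.1| <= M /\ `|z.2| <= M) ->
  (forall i, a i != 0) ->
  (forall i, (a i).1 * x.1 + (a i).2 * x.2 < b i) ->
  (forall i, (a i).1 * y.1 + (a i).2 * y.2 < b i) -> 0 < r ->
  Funk (hset a b) x y <= r <->
  forall i, expR r * (((a i).1 * y.1 + (a i).2 * y.2) - ((a i).1 * x.1 + (a i).2 * x.2))
     <= (expR r - 1) * (b i - ((a i).1 * x.1 + (a i).2 * x.2)).
Proof.
move=> hM ha hx hy hr.
have hE : 1 < expR r by rewrite expR_gt1.
rewrite /Funk; case: (eqVneq x y) => [<-|hxy].
  split=> _; last exact: ltW.
  move=> i; rewrite subrr mulr0; apply: mulr_ge0; first by rewrite subr_ge0 ltW.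
  by rewrite subr_ge0 ltW.
have hyx : y != x by rewrite eq_sym.
have [t [ht [he [hz [j hj]]]]] := exit_char hM ha hx hyx.
have hD := diff_nz hyx.
set D := (y.1 - x.1) ^+ 2 + (y.2 - x.2) ^+ 2 in hD.
have ht1 : 1 < t.
  have := hy j; have := hx j; move: hj => /= hj h1 h2.
  have hu : 0 < (a j).1 * (y.1 - x.1) + (a j).2 * (y.2 - x.2) by nra.
  nra.
rewrite he /Defs.edist /=.

have -> : (x.1 - (x.1 + t * (y.1 - x.1))) ^+ 2 + (x.2 - (x.2 + t * (y.2 - x.2))) ^+ 2
   = t ^+ 2 * D by rewrite /D; ring.
have -> : (y.1 - (x.1 + t * (y.1 - x.1))) ^+ 2 + (y.2 - (x.2 + t * (y.2 - x.2))) ^+ 2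
   = (t - 1) ^+ 2 * D by rewrite /D; ring.
rewrite (sqrtrM D (sqr_ge0 t)) (sqrtrM D (sqr_ge0 (t - 1))) !sqrtr_sqr (ger0_norm ht) ger0_norm; last by lra.
have hsD : 0 < Num.sqrt D by rewrite sqrtr_gt0.
have -> : t * Num.sqrt D / ((t - 1) * Num.sqrt D) = t / (t - 1).
  by rewrite invfM mulrACA mulfV ?gt_eqF // mulr1.
have hq : 0 < t / (t - 1) by rewrite divr_gt0 //; lra.
have -> : (ln (t / (t - 1)) <= r) = (t / (t - 1) <= expR r).
  by rewrite -[in LHS](expRK r) ler_ln ?posrE ?expR_gt0.
rewrite ler_pdivrMr; last by lra.
move: hj hz => /= hj hz.
split.
  move=> h i; have := hz i; have := hx i; rewrite /halfplane /= => h1 h2.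
  case: (ltP 0 ((a i).1 * (y.1 - x.1) + (a i).2 * (y.2 - x.2))) => hu; nra.
move=> h; have := h j; have := hx j => h1 h2.
have hu : 0 < (a j).1 * (y.1 - x.1) + (a j).2 * (y.2 - x.2) by nra.
nra.
Qed.

Lemma pair_nz (R : realType) (c1 c2 : R) : 0 < c1 ^+ 2 + c2 ^+ 2 -> (c1, c2) != 0 :> R * R.
Proof.
move=> h; apply/eqP => e; have h1 := congr1 fst e; have h2 := congr1 snd e.
move: h1 h2 => /= h1 h2; move: h; rewrite h1 h2 expr0n /= addr0 ltxx //.
Qed.

Unset Implicit Arguments.
Theorem mainTheorem1 (R : realType) (m : nat) (Om : set (R * R)) (p : R * R) (r : R) :
  convex_polygon_sides Om m -> interior Om p -> 0 < r ->
  ball_D Om (@Thompson R Om) p r =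
    ball_D Om (@Funk R Om) p r `&` ball_D Om (@rFunk R Om) p r /\
  exists k : nat, (k <= 2 * m)%N /\ convex_polygon_sides (ball_D Om (@Thompson R Om) p r) k.
Proof.
move=> [[[M hM] [_ [a [b [ha hOm]]]]] _] hp hr.
have hballs : ball_D Om (@Thompson R Om) p r =
    ball_D Om (@Funk R Om) p r `&` ball_D Om (@rFunk R Om) p r.
  apply/seteqP; split => q /=.
    by rewrite /ball_D /Thompson /= ge_max => -[hq /andP[h1 h2]].
  by rewrite /ball_D /Thompson /= ge_max => -[[hq h1] [_ h2]]; split => //; rewrite h1 h2.
split => //.
subst Om.
set S := [set x | forall i, halfplane (a i) (b i) x] in hM hp *.
have hS : S = hset a b by [].
rewrite hS in hM hp *.
have hE : 1 < expR r by rewrite expR_gt1.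
set E := expR r in hE.
have hps := int_strict ha hp.
pose c (i : 'I_(m + m)) : R * R := match fintype.split i with
  | inl j => (E * (a j).1, E * (a j).2) | inr j => (- (a j).1, - (a j).2) end.
pose d (i : 'I_(m + m)) : R := match fintype.split i with
  | inl j => (E - 1) * b j + ((a j).1 * p.1 + (a j).2 * p.2)
  | inr j => (E - 1) * b j - E * ((a j).1 * p.1 + (a j).2 * p.2) end.
have hB : ball_D (hset a b) (@Thompson R (hset a b)) p r = hset c d.
  apply/seteqP; split => q.
    rewrite /ball_D /Thompson /= ge_max => -[hq /andP[h1 h2]].
    have hqs := int_strict ha hq.
    have c1 := (funk_le hM ha hps hqs hr).1 h1.
    have c2 := (funk_le hM ha hqs hps hr).1 h2.
    move=> i; rewrite /c /d /halfplane; case: (fintype.split i) => j /=.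
      have := c1 j; rewrite -/E => ?; nra.
    have := c2 j; rewrite -/E => ?; nra.
  move=> hq.
  have c1 : forall j, E * ((a j).1 * q.1 + (a j).2 * q.2) <= (E - 1) * b j + ((a j).1 * p.1 + (a j).2 * p.2).
    move=> j; have := hq (unsplit (inl j)); rewrite /c /d /halfplane unsplitK /= => ?; nra.
  have c2 : forall j, - ((a j).1 * q.1 + (a j).2 * q.2) <= (E - 1) * b j - E * ((a j).1 * p.1 + (a j).2 * p.2).
    move=> j; have := hq (unsplit (inr j)); rewrite /c /d /halfplane unsplitK /= => ?; nra.
  have hqs : forall i, (a i).1 * q.1 + (a i).2 * q.2 < b i.
    move=> i; have := c1 i; have := hps i => ? ?; nra.
  rewrite /ball_D /Thompson /= ge_max; split; first exact: strict_int.
  apply/andP; split.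
    apply/(funk_le hM ha hps hqs hr) => j; rewrite -/E; have := c1 j => ?; nra.
  apply/(funk_le hM ha hqs hps hr) => j; rewrite -/E; have := c2 j => ?; nra.
set B := ball_D (hset a b) (@Thompson R (hset a b)) p r in hB *.
have hrep : polygon_hrep (m + m) B.
  split.
    exists M => z hz; apply: hM; exact: interior_subset (proj1 hz).
  split.
    exists p; rewrite hB; apply: strict_int => i; rewrite /c /d; case: (fintype.split i) => j /=.
      have := hps j => ?; nra.
    have := hps j => ?; nra.
  exists c, d; split => //.
  move=> i; rewrite /c; case: (fintype.split i) => j; apply: pair_nz; have := nz_sq (ha j).
    move=> h; rewrite !exprMn -mulrDr; apply: mulr_gt0 => //; apply: exprn_gt0; lra.
  by rewrite !sqrrN.
pose P k := `[< polygon_hrep k B >].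
have hex : exists k, P k by exists (m + m); apply/asboolP.
case: (ex_minnP hex) => k /asboolP hk hmin.
exists k; split.
  have := hmin (m + m) (asboolT hrep); move=> h; rewrite mul2n -addnn; exact: h.
split => // k' hk' hk'rep.
have := hmin k' (asboolT hk'rep); rewrite leqNgt hk' //.
Qed.
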